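(* Let $A\in\mathbb{R}^{n\times n}$ be nonsingular with $\rho(|A^{-1}|)<1/3$. Then for every $b\in\mathbb{R}^n$ and every starting vector $x^0\in\mathbb{R}^n$, the generalized Newton method $x^{k+1}=(A-D(x^k))^{-1}b$ is well defined for all $k\ge 0$ (each $A-D(x^k)$ is nonsingular), and the sequence $\{x^k\}$ converges to the unique solution $x^*$ of $Ax-|x|=b$.
   Context: For a matrix $M=[m_{ij}]$, $|M|=[|m_{ij}|]$ is the entrywise absolute value; for a vector $x$, $|x|$ is the componentwise absolute value. $\rho(\cdot)$ is the spectral radius. $\mathrm{sign}(x)$ is the vector whose components are $1,0,-1$ according as the corresponding component of $x$ is positive, zero, negative, and $D(x)=\mathrm{diag}(\mathrm{sign}(x))$. The generalized Newton method for $Ax-|x|=b$ is the iteration $x^{k+1}=(A-D(x^k))^{-1}b$ from a given $x^0$. *)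

(* Defs.v *)
From HB Require Import structures.
From mathcomp Require Import all_boot all_order all_algebra.
From mathcomp Require Import all_classical all_reals all_analysis.
From mathcomp Require complex.
Import complex.ComplexField.
Set Implicit Arguments. Unset Strict Implicit. Unset Printing Implicit Defensive.
Import Order.TTheory GRing.Theory Num.Theory.
Local Open Scope ring_scope.
Local Open Scope classical_set_scope.

Definition abs_mx (R : realType) m n (M : 'M[R]_(m, n)) : 'M[R]_(m, n) :=
  map_mx (fun x => `|x|) M.

Definition Dsign (R : realType) n (x : 'cV[R]_n) : 'M[R]_n :=
  \matrix_(i, j) ((i == j)%:R * Num.sg (x i 0)).

Definition ceigenvalue (R : realType) n (M : 'M[R]_n) (l : complex.complex R) :=
  eigenvalue (map_mx (fun x : R => complex.real_complex R x) M) l.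

(* spectral radius: largest modulus of a (complex) eigenvalue; sup set0 = 0 *)
Definition spectral_radius (R : realType) n (M : 'M[R]_n) : R :=
  sup [set complex.ComplexField.Normc.normc l | l in [set l | ceigenvalue M l]].

Fixpoint gen_newton (R : realType) n (A : 'M[R]_n) (b x0 : 'cV[R]_n) (k : nat)
  : 'cV[R]_n :=
  match k with
  | 0 => x0
  | k'.+1 => invmx (A - Dsign (gen_newton A b x0 k')) *m b
  end.

(* Main.v *)
Require Import Defs.
From HB Require Import structures.
From mathcomp Require Import all_boot all_order all_algebra.
From mathcomp Require Import all_classical all_reals all_analysis.
From mathcomp Require Import ring lra.
From mathcomp Require complex.
Import complex.ComplexField.
Import Order.TTheory GRing.Theory Num.Theory numFieldNormedType.Exports.
Local Open Scope ring_scope.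
Local Open Scope classical_set_scope.
Set Implicit Arguments. Unset Strict Implicit. Unset Printing Implicit Defensive.
Definition Kn (R : realType) m p (M : 'M[R]_(m, p)) : R :=
  \sum_i \sum_j `|M i j|.
Definition nonneg (R : realType) m p (M : 'M[R]_(m, p)) :=
  forall i j, 0 <= M i j.

Lemma Kn_ge0 (R : realType) m p (M : 'M[R]_(m, p)) : 0 <= Kn M.
Proof. by apply: sumr_ge0 => i _; apply: sumr_ge0 => j _. Qed.

Lemma row_le_Kn (R : realType) m p (M : 'M[R]_(m, p)) i :
  \sum_j `|M i j| <= Kn M.
Proof.
rewrite /Kn (bigD1 i) //= lerDl; apply: sumr_ge0 => k _.
by apply: sumr_ge0.
Qed.

Lemma Kn_add (R : realType) m p (M N : 'M[R]_(m, p)) :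
  Kn (M + N) <= Kn M + Kn N.
Proof.
rewrite /Kn -big_split /=; apply: ler_sum => i _.
rewrite -big_split /=; apply: ler_sum => j _; rewrite mxE; exact: ler_normD.
Qed.

Lemma Kn_scale (R : realType) m p (a : R) (M : 'M[R]_(m, p)) :
  Kn (a *: M) = `|a| * Kn M.
Proof.
rewrite /Kn mulr_sumr; apply: eq_bigr => i _; rewrite mulr_sumr.
by apply: eq_bigr => j _; rewrite mxE normrM.
Qed.

Lemma Kn_mul (R : realType) m p q (M : 'M[R]_(m, p)) (N : 'M[R]_(p, q)) :
  Kn (M *m N) <= Kn M * Kn N.
Proof.
rewrite /Kn mulr_suml; apply: ler_sum => i _.
apply: (@le_trans _ _ (\sum_j \sum_k `|M i k| * `|N k j|)).
  apply: ler_sum => j _; rewrite mxE.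
  apply: (le_trans (ler_norm_sum _ _ _)).
  by apply: ler_sum => k _; rewrite normrM.
rewrite exchange_big /= mulr_suml; apply: ler_sum => k _.
rewrite -mulr_sumr; apply: ler_wpM2l => //; exact: row_le_Kn.
Qed.

Lemma MP (R : realType) n p (M : 'M[R]_n) (h : R) (X Y : 'M[R]_(n, p)) :
  nonneg M -> 0 <= h -> h * Kn M < 1 ->
  (1%:M - h *: M) *m X = Y -> nonneg Y -> nonneg X.
Proof.
move=> M0 h0 hK eXY Y0 i j; rewrite leNgt; apply/negP => Xij.
have [k _ kmin] := @arg_minP _ _ _ i xpredT (fun k => X k j) isT.

have Xk : X k j < 0 by apply: le_lt_trans (kmin i isT) Xij.
have := Y0 k j; rewrite -eXY mulmxBl mul1mx -scalemxAl !mxE.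
set S := \sum_l _.
have S1 : (\sum_l M k l) * X k j <= S.
  rewrite mulr_suml /S; apply: ler_sum => l _.
  by apply: ler_wpM2l => //; apply: kmin.
have S2 : \sum_l M k l <= Kn M.
  apply: le_trans (row_le_Kn M k); apply: ler_sum => l _; exact: ler_norm.
have K0 := Kn_ge0 M.
move=> HY.
have S3 : Kn M * X k j <= S by apply: le_trans S1; rewrite ler_wnM2r // ltW.
nra.
Qed.
Lemma resolvent (R : realType) n (B : 'M[R]_n) (t u : R) :
  (t%:M - B) \in unitmx -> (u%:M - B) \in unitmx ->
  (1%:M - (t - u) *: invmx (t%:M - B)) *m invmx (u%:M - B) = invmx (t%:M - B).
Proof.
move=> Ut Uu.
have E : u%:M - B = (t%:M - B) - (t - u)%:M.
  apply/matrixP => i j; rewrite !mxE; ring.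
have F : invmx (t%:M - B) *m (u%:M - B) = 1%:M - (t - u) *: invmx (t%:M - B).
  by rewrite E mulmxBr mulVmx // mul_mx_scalar.
by rewrite -F -mulmxA mulmxV // mulmx1.
Qed.

Lemma large_nonneg (R : realType) n (B : 'M[R]_n) (t : R) :
  nonneg B -> Kn B + 1 <= t -> (t%:M - B) \in unitmx ->
  nonneg (invmx (t%:M - B)).
Proof.
move=> B0 Ht Ut.
have K0 := Kn_ge0 B.
have t0 : 0 < t by lra.
have H : (1%:M - t^-1 *: B) *m (t *: invmx (t%:M - B)) = 1%:M.
  have E : 1%:M - t^-1 *: B = t^-1 *: (t%:M - B).
    apply/matrixP => i j; rewrite !mxE; case: (i == j) => /=; field; lra.
  rewrite E -scalemxAl -scalemxAr scalerA mulVf ?gt_eqF // scale1r mulmxV //.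
have := MP (X := t *: invmx (t%:M - B)) B0 _ _ H.
move=> /(_ _ _ _) H2 i j.
have : 0 <= t * invmx (t%:M - B) i j.
  have := H2 _ _ _ i j; rewrite mxE; apply.
  - by rewrite invr_ge0 ltW.
  - rewrite mulrC ltr_pdivrMr // mul1r; lra.
  - by move=> a b; rewrite mxE; case: (a == b) => /=; lra.
by rewrite pmulr_rge0.
Qed.
Lemma resolvent_nonneg (R : realType) n (B : 'M[R]_n) (s : R) :
  nonneg B -> (forall t, s <= t -> (t%:M - B) \in unitmx) ->
  nonneg (invmx (s%:M - B)).
Proof.
move=> B0 HU.
pose Rr t := invmx (t%:M - B).
pose G := [set t | s <= t /\ forall t', t <= t' -> nonneg (Rr t')].
have KB := Kn_ge0 B.
pose T := Num.max s (Kn B + 1).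
have GT : G T.
  split; first by rewrite le_max lexx.
  move=> t' Ht'; apply: large_nonneg => //.
    by apply: le_trans Ht'; rewrite le_max lexx orbT.
  by apply: HU; apply: le_trans Ht'; rewrite le_max lexx.
have Glb : lbound G s by move=> x [].
have hinf : has_inf G by split; [exists T | exists s].
pose u := inf G.
have su : s <= u by apply: lb_le_inf => //; exists T.
have Gu_ge : forall g, G g -> u <= g.
  by move=> g Gg; apply: ge_inf => //; exists s.
have claim1 : forall t', u < t' -> nonneg (Rr t').
  move=> t' ut'.
  have [g [sg Gg] gt] := inf_adherent (ltac:(by rewrite subr_gt0) : 0 < t' - u) hinf.
  apply: Gg; rewrite -/u in gt; apply: ltW; move: gt; rewrite addrC subrK //.
have claim2 : nonneg (Rr u).
  pose N := Kn (Rr u).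
  have N0 : 0 <= N := Kn_ge0 _.
  have eps0 : 0 < (4 * (N + 1))^-1 by rewrite invr_gt0; lra.
  have [g [sg Gg] gt] := inf_adherent eps0 hinf.
  rewrite -/u in gt.
  have ug := Gu_ge g (conj sg Gg).
  have Ug := HU g sg; have Uu := HU u su.
  have id1 := resolvent Ug Uu.
  have id2 := resolvent Uu Ug.
  have d0 : 0 <= g - u by rewrite subr_ge0.
  have dN : (g - u) * (4 * (N + 1)) < 1.
    have : (g - u) * (4 * (N + 1)) < (4 * (N + 1))^-1 * (4 * (N + 1)).
      rewrite ltr_pM2r; last lra.
      by rewrite ltrBlDl.
    by rewrite mulVf //; lra.
  have Kg0 : 0 <= Kn (Rr g) := Kn_ge0 _.
  have Kg : Kn (Rr g) <= N + (g - u) * (N * Kn (Rr g)).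
    have E : Rr g = Rr u + (u - g) *: (Rr u *m Rr g).
      have E' : Rr g - (u - g) *: (Rr u *m Rr g) = Rr u.
        by move: id2; rewrite mulmxBl mul1mx -scalemxAl.
      by rewrite -[X in _ = X + _]E' subrK.
    rewrite {1}E; apply: le_trans (Kn_add _ _) _; rewrite lerD2l Kn_scale.
    rewrite distrC ger0_norm //; apply: ler_wpM2l => //; exact: Kn_mul.
  apply: (MP (M := Rr g) (h := g - u) (Y := Rr g)) => //.
  - exact: Gg.
  - nra.
  - exact: Gg.
have Gu : G u.
  split=> // t'; rewrite le_eqVlt => /predU1P [<- | ]; first exact: claim2.
  exact: claim1.
have E : s = u.
  apply/eqP; rewrite eq_le su /= leNgt; apply/negP => su'.
  pose N := Kn (Rr u).
  have N0 : 0 <= N := Kn_ge0 _.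
  pose h := Num.min (u - s) (2 * (N + 1))^-1.
  have h0 : 0 < h by rewrite lt_min subr_gt0 su' /= invr_gt0; lra.
  have h1 : h <= u - s by rewrite ge_min lexx.
  have h2 : h * (2 * (N + 1)) <= 1.
    have : h <= (2 * (N + 1))^-1 by rewrite ge_min lexx orbT.
    move=> hh.
    have : h * (2 * (N + 1)) <= (2 * (N + 1))^-1 * (2 * (N + 1)).
      by rewrite ler_pM2r //; lra.
    rewrite mulVf //; lra.
  have Gt0 : G (u - h).
    split; first lra.
    move=> t' Ht'; case: (leP u t') => [ut'|t'u]; first exact: Gu.2.
    have st' : s <= t' by lra.
    apply: (MP (M := Rr u) (h := u - t') (Y := Rr u)).
    - exact: Gu.2.
    - lra.
    - rewrite -/N; have : (u - t') * N <= h * N by apply: ler_wpM2r => //; lra.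
      nra.
    - exact: (resolvent (HU u su) (HU t' st')).
    - exact: Gu.2.
  have := Gu_ge _ Gt0; lra.
by have := Gu.2 u (lexx u); rewrite /Rr E.
Qed.
Lemma perron_vec (R : realType) n (B : 'M[R]_n) (c : R) :
  nonneg B -> 0 < c -> (forall t, c <= t -> (t%:M - B) \in unitmx) ->
  exists v : 'cV[R]_n, (forall i, 0 < v i 0) /\
                       (forall i, (B *m v) i 0 <= c * v i 0).
Proof.
move=> B0 c0 HU.
have Rn := resolvent_nonneg B0 HU.
exists (invmx (c%:M - B) *m (const_mx (1 : R) : 'cV[R]_n)).
set v := _ *m _.
have v0 : forall i, 0 <= v i 0.
  by move=> i; rewrite mxE; apply: sumr_ge0 => j _; rewrite mxE mulr1; exact: Rn.
have E : (c%:M - B) *m v = const_mx (1 : R) by rewrite mulmxA mulmxV ?mul1mx // HU.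
have Bv0 : forall i, 0 <= (B *m v) i 0.
  by move=> i; rewrite mxE; apply: sumr_ge0 => j _; apply: mulr_ge0.
have Ei : forall i, c * v i 0 - (B *m v) i 0 = 1.
  move=> i; have := congr1 (fun M : 'cV[R]_n => M i 0) E.
  by rewrite mulmxBl mul_scalar_mx !mxE.
by split => i; have := Ei i; have := Bv0 i; have := v0 i; nra.
Qed.

Lemma normc_real (R : realType) (a : R) :
  complex.ComplexField.Normc.normc (complex.real_complex R a) = `|a|.
Proof. by rewrite /complex.ComplexField.Normc.normc /= expr0n /= addr0 sqrtr_sqr. Qed.

Lemma normc_ge0 (R : realType) (z : complex.complex R) :
  0 <= complex.ComplexField.Normc.normc z.
Proof. by case: z => a b; rewrite /complex.ComplexField.Normc.normc sqrtr_ge0. Qed.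

Lemma normc_sum (R : realType) (I : Type) (r : seq I) (F : I -> complex.complex R) :
  complex.ComplexField.Normc.normc (\sum_(i <- r) F i) <=
  \sum_(i <- r) complex.ComplexField.Normc.normc (F i).
Proof.
apply: (big_ind2 (fun x y => complex.ComplexField.Normc.normc x <= y)) => //.
  by rewrite complex.ComplexField.Normc.normc0.
move=> x1 x2 y1 y2 h1 h2.
apply: le_trans (complex.le_normcD x1 y1) _; exact: lerD.
Qed.

Lemma col_le_Kn (R : realType) m p (M : 'M[R]_(m, p)) k :
  \sum_j `|M j k| <= Kn M.
Proof.
rewrite /Kn; apply: ler_sum => j _; rewrite (bigD1 k) //= lerDl.
by apply: sumr_ge0.
Qed.

Lemma eig_bound (R : realType) n (B : 'M[R]_n) l :
  ceigenvalue B l -> complex.ComplexField.Normc.normc l <= Kn B.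
Proof.
move=> /eigenvalueP [v Hv vn0].
have [i vi] : exists i, v 0 i != 0.
  apply/existsP; apply: contraNT vn0 => /existsPn H.
  apply/eqP/matrixP => a b; rewrite !mxE (ord1 a); exact/eqP/negPn/H.
pose nc := @complex.ComplexField.Normc.normc R.
have [k _ kmax] := @arg_maxP _ _ _ i xpredT (fun k => nc (v 0 k)) isT.
have vk : 0 < nc (v 0 k).
  rewrite lt_neqAle normc_ge0 andbT eq_sym; apply/eqP => /complex.ComplexField.Normc.eq0_normc H.
  have Hi : nc (v 0 i) <= 0.
    by have := kmax i isT; rewrite /= H /nc complex.ComplexField.Normc.normc0.
  have H0 : nc (v 0 i) = 0 by apply/eqP; rewrite eq_le Hi normc_ge0.
  by move: vi; rewrite (complex.ComplexField.Normc.eq0_normc H0) eqxx.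
have := congr1 (fun M : 'rV[complex.complex R]_n => M 0 k) Hv; rewrite !mxE => E.
have H1 : nc l * nc (v 0 k) <= nc (v 0 k) * Kn B.
  rewrite /nc -complex.ComplexField.Normc.normcM -E.
  eapply le_trans; first exact: normc_sum.
  apply: (@le_trans _ _ (\sum_j nc (v 0 k) * `|B j k|)).
    apply: ler_sum => j _; rewrite mxE complex.ComplexField.Normc.normcM normc_real.
    by apply: ler_wpM2r => //; apply: kmax.
  by rewrite -mulr_sumr; apply: ler_wpM2l; [exact: ltW | exact: col_le_Kn].
by rewrite mulrC ler_pM2l in H1.
Qed.
Lemma real_eig (R : realType) n (B : 'M[R]_n) (t : R) :
  ~~ ((t%:M - B) \in unitmx) -> ceigenvalue B (complex.real_complex R t).
Proof.
rewrite unitmxE unitfE negbK => /det0P [v vn0 Hv].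
apply/eigenvalueP; exists (map_mx (complex.real_complex R) v).
  have E : v *m B = t *: v.
    by move: Hv; rewrite mulmxBr mul_mx_scalar => /eqP; rewrite subr_eq0 => /eqP <-.
  change (map_mx (fun x : R => complex.real_complex R x) B)
    with (map_mx (complex.real_complex R) B).
  rewrite -map_mxM E; apply/matrixP => a b; rewrite !mxE.
  by rewrite rmorphM.
by rewrite map_mx_eq0.
Qed.

Lemma spec_unit (R : realType) n (B : 'M[R]_n) (c : R) :
  spectral_radius B < c -> forall t, c <= t -> (t%:M - B) \in unitmx.
Proof.
move=> Hc t ct; apply: contraT => nU.
have E := real_eig nU.
have : complex.ComplexField.Normc.normc (complex.real_complex R t) <= spectral_radius B.
  apply: sup_upper_bound; last by exists (complex.real_complex R t).
  split; first by exists (complex.ComplexField.Normc.normc (complex.real_complex R t)); exists (complex.real_complex R t).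
  by exists (Kn B) => x [l Hl <-]; exact: eig_bound.
rewrite normc_real => H.
have := ler_norm t; lra.
Qed.
Definition mu (R : realType) n (v y : 'cV[R]_n) : R :=
  \big[Num.max/0]_i (`|y i 0| / v i 0).

Lemma mu_ge0 (R : realType) n (v y : 'cV[R]_n) : 0 <= mu v y.
Proof.
rewrite /mu; elim/big_rec: _ => // i x _ Hx.
by rewrite le_max Hx orbT.
Qed.

Lemma mu_bound (R : realType) n (v y : 'cV[R]_n) :
  (forall i, 0 < v i 0) -> forall i, `|y i 0| <= mu v y * v i 0.
Proof.
move=> v0 i; rewrite -ler_pdivrMr //.
exact: (le_bigmax 0 (fun i => `|y i 0| / v i 0) i).
Qed.

Lemma mu_le (R : realType) n (v y : 'cV[R]_n) (m : R) :
  (forall i, 0 < v i 0) -> 0 <= m ->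
  (forall i, `|y i 0| <= m * v i 0) -> mu v y <= m.
Proof.
move=> v0 m0 H; rewrite /mu; apply: bigmax_le => // i _.
by rewrite ler_pdivrMr.
Qed.

Lemma contr (R : realType) n (A : 'M[R]_n) (v : 'cV[R]_n) (c : R)
  (y : 'cV[R]_n) (m : R) :
  (forall i, 0 < v i 0) ->
  (forall i, (abs_mx (invmx A) *m v) i 0 <= c * v i 0) -> 0 <= m ->
  (forall j, `|y j 0| <= m * v j 0) ->
  forall i, `|(invmx A *m y) i 0| <= c * m * v i 0.
Proof.
move=> v0 Hv m0 Hy i; rewrite mxE.
apply: le_trans (ler_norm_sum _ _ _) _.
apply: (@le_trans _ _ (m * (abs_mx (invmx A) *m v) i 0)); last first.
  by rewrite -mulrA mulrCA; apply: ler_wpM2l.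
rewrite mxE mulr_sumr; apply: ler_sum => j _; rewrite normrM !mxE mulrCA.
by apply: ler_wpM2l => //; rewrite mulrC.
Qed.

Lemma contract_mu (R : realType) n (A : 'M[R]_n) (v : 'cV[R]_n) (c : R)
  (y z : 'cV[R]_n) (m : R) :
  (forall i, 0 < v i 0) ->
  (forall i, (abs_mx (invmx A) *m v) i 0 <= c * v i 0) -> 0 <= c -> 0 <= m ->
  z = invmx A *m y ->
  (forall j, `|y j 0| <= `|z j 0| + m * v j 0) ->
  mu v z * (1 - c) <= c * m.
Proof.
move=> v0 Hv c0 m0 Ez Hy.
have mz := mu_ge0 v z.
have H : forall i, `|z i 0| <= c * (mu v z + m) * v i 0.
  move=> i; rewrite {1}Ez; apply: contr => //; first lra.
  move=> j; apply: le_trans (Hy j) _; rewrite mulrDl lerD2r.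
  exact: mu_bound.
have : mu v z <= c * (mu v z + m).
  apply: mu_le => //; nra.
nra.
Qed.

Lemma Dsign_mul (R : realType) n (x w : 'cV[R]_n) i :
  (Dsign x *m w) i 0 = Num.sg (x i 0) * w i 0.
Proof.
rewrite mxE (bigD1 i) //= !mxE eqxx mul1r big1 ?addr0 // => j ji.
by rewrite !mxE eq_sym (negbTE ji) !mul0r.
Qed.

Lemma sg_ineq (R : realType) (a a2 b : R) :
  `|Num.sg a * a2 - Num.sg b * a| <= `|a2 - a| + 2 * `|a - b|.
Proof.
have h1 := ler_norm (a2 - a); have h2 := ler_norm (- (a2 - a)).
have h3 := ler_norm (a - b); have h4 := ler_norm (- (a - b)).
rewrite normrN in h2; rewrite normrN in h4.
rewrite ler_norml.
case: (ltrgt0P a) => a0; case: (ltrgt0P b) => b0; try subst;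
  rewrite ?(gtr0_sg a0) ?(ltr0_sg a0) ?(gtr0_sg b0) ?(ltr0_sg b0) ?sgr0;
  apply/andP; split; lra.
Qed.
Lemma sg_eq (R : realType) (a b : R) :
  (0 < a) = (0 < b) -> (a < 0) = (b < 0) -> Num.sg a = Num.sg b.
Proof.
case: (ltrgt0P a) => ha; case: (ltrgt0P b) => hb //= _ _; try subst;
 by rewrite ?(gtr0_sg ha) ?(ltr0_sg ha) ?(gtr0_sg hb) ?(ltr0_sg hb) ?sgr0.
Qed.

Lemma mu0 (R : realType) n (v w : 'cV[R]_n) :
  (forall i, 0 < v i 0) -> mu v w <= 0 -> w = 0.
Proof.
move=> v0 H; apply/matrixP => i j; rewrite (ord1 j) mxE.
have := mu_bound w v0 i.
have := mu_ge0 v w; have := v0 i; have := normr_ge0 (w i 0) => h1 h2 h3 h4.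
have : `|w i 0| <= 0 by nra.
by rewrite normr_le0 => /eqP.
Qed.

Lemma newton_eq (R : realType) n (A : 'M[R]_n) (b x0 : 'cV[R]_n) k :
  A - Dsign (gen_newton A b x0 k) \in unitmx ->
  A *m gen_newton A b x0 k.+1 - Dsign (gen_newton A b x0 k) *m gen_newton A b x0 k.+1 = b.
Proof.
by move=> U; rewrite -mulmxBl /= mulmxA mulmxV // mul1mx.
Qed.

Lemma abs_sol (R : realType) n (x : 'cV[R]_n) : Dsign x *m x = abs_mx x.
Proof. by apply/matrixP => i j; rewrite (ord1 j) Dsign_mul mxE normrEsg. Qed.
Lemma mxsubE (R : realType) m p (u w : 'M[R]_(m, p)) i j :
  (u - w) i j = u i j - w i j.
Proof. by rewrite !mxE. Qed.

Theorem theorem3p7 (R : realType) (n : nat) (A : 'M[R]_n) :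
  A \in unitmx ->
  spectral_radius (abs_mx (invmx A)) < 1 / 3 ->
  forall b x0 : 'cV[R]_n,
    (forall k : nat, A - Dsign (gen_newton A b x0 k) \in unitmx) /\
    exists2 xs : 'cV[R]_n,
      (A *m xs - abs_mx xs = b /\
       forall y : 'cV[R]_n, A *m y - abs_mx y = b -> y = xs) &
      forall i : 'I_n, (fun k => gen_newton A b x0 k i 0) @ \oo --> xs i 0.
Proof.
move=> UA Hrho b x0.
set B := abs_mx (invmx A).
set rho := spectral_radius B.
pose M := if rho < 0 then 0 else rho.
have M1 : rho <= M /\ 0 <= M /\ M < 1 / 3.
  have Hr : rho < 1 / 3 := Hrho.
  by rewrite /M; case: ltP => h; (split; [|split]); lra.
pose c := (M + 1 / 3) / 2.
have c0 : 0 < c by rewrite /c; lra.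
have c3 : c < 1 / 3 by rewrite /c; lra.
have cr : rho < c by rewrite /c; lra.
have B0 : nonneg B by move=> i j; rewrite mxE normr_ge0.
have [v [v0 Hv]] := perron_vec B0 c0 (spec_unit cr).
have cc0 : 0 <= c by exact: ltW.
have Uall : forall x : 'cV[R]_n, A - Dsign x \in unitmx.
  move=> x; apply: contraT; rewrite unitmxE unitfE negbK -det_tr => /det0P [u un0 Hu].
  have Hw : (A - Dsign x) *m u^T = 0.
    by rewrite -[LHS]trmxK trmx_mul trmxK Hu trmx0.
  have Ew : u^T = invmx A *m (Dsign x *m u^T).
    move: Hw; rewrite mulmxBl => /eqP; rewrite subr_eq0 => /eqP <-.
    by rewrite mulKmx.
  have := contract_mu v0 Hv cc0 (lexx 0) Ew.
  have Hy : forall j, `|(Dsign x *m u^T) j 0| <= `|u^T j 0| + 0 * v j 0.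
    move=> j; rewrite Dsign_mul normrM normr_sg mul0r addr0.
    by case: (_ != 0); rewrite ?mul1r ?mul0r.
  move=> /(_ Hy); rewrite mulr0 => H.
  have : mu v u^T <= 0.
    have := mu_ge0 v u^T; nra.
  move=> /(mu0 v0) /eqP; rewrite trmx_eq0 => u0.
  by rewrite u0 in un0.
have Uniq : forall y1 y2 : 'cV[R]_n,
    A *m y1 - abs_mx y1 = b -> A *m y2 - abs_mx y2 = b -> y1 = y2.
  move=> y1 y2 E1 E2.
  have Ew : y1 - y2 = invmx A *m (abs_mx y1 - abs_mx y2).
    have : A *m (y1 - y2) = abs_mx y1 - abs_mx y2.
      have F1 : A *m y1 = b + abs_mx y1 by rewrite -E1 subrK.
      have F2 : A *m y2 = b + abs_mx y2 by rewrite -E2 subrK.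
      by rewrite mulmxBr F1 F2 opprD addrACA subrr add0r.
    by move=> <-; rewrite mulKmx.
  have Hy : forall j, `|(abs_mx y1 - abs_mx y2) j 0| <= `|(y1 - y2) j 0| + 0 * v j 0.
    by move=> j; rewrite !mxE mul0r addr0; exact: ler_dist_dist.
  have := contract_mu v0 Hv cc0 (lexx 0) Ew Hy; rewrite mulr0 => H.
  have : mu v (y1 - y2) <= 0.
    have := mu_ge0 v (y1 - y2); nra.
  by move=> /(mu0 v0) /eqP; rewrite subr_eq0 => /eqP.
have [x Ex] : {x | x = gen_newton A b x0} by exists (gen_newton A b x0).
have xS : forall k, x k.+1 = invmx (A - Dsign (x k)) *m b by move=> k; rewrite Ex.
have eqk : forall k, A *m x k.+1 - Dsign (x k) *m x k.+1 = b.
  by move=> k; rewrite Ex; apply: newton_eq.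
have eqk' : forall k, A *m x k.+1 = b + Dsign (x k) *m x k.+1.
  by move=> k; rewrite -(eqk k) subrK.
pose e k := mu v (x k.+1 - x k).
have e0 : forall k, 0 <= e k by move=> k; exact: mu_ge0.
have step : forall k, e k.+1 * (1 - c) <= c * (2 * e k).
  move=> k.
  have Ez : x k.+2 - x k.+1 =
    invmx A *m (Dsign (x k.+1) *m x k.+2 - Dsign (x k) *m x k.+1).
    have : A *m (x k.+2 - x k.+1) =
        Dsign (x k.+1) *m x k.+2 - Dsign (x k) *m x k.+1.
      by rewrite mulmxBr eqk' eqk' opprD addrACA subrr add0r.
    by move=> <-; rewrite mulKmx.
  apply: (contract_mu v0 Hv cc0 _ Ez).
    by have := e0 k; lra.
  move=> j; have -> : (Dsign (x k.+1) *m x k.+2 - Dsign (x k) *m x k.+1) j 0 = Num.sg (x k.+1 j 0) * x k.+2 j 0 - Num.sg (x k j 0) * x k.+1 j 0.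
    by rewrite -!Dsign_mul !mxE.
  rewrite mxsubE.
  have H1 := sg_ineq (x k.+1 j 0) (x k.+2 j 0) (x k j 0).
  have H2 : `|x k.+1 j 0 - x k j 0| <= e k * v j 0.
    by have := mu_bound (x k.+1 - x k) v0 j; rewrite mxsubE.
  apply: le_trans H1 _; rewrite -mulrA; lra.
have dec : forall k, e k.+1 <= e k.
  move=> k; have := step k; have := e0 k; have := e0 k.+1 => h1 h2 h3.
  have h4 : 2 * c * e k <= (1 - c) * e k by apply: ler_wpM2r => //; lra.
  nra.
have mono : forall k p, e (k + p)%N <= e k.
  move=> k; elim => [|p IH]; first by rewrite addn0.
  by rewrite addnS; apply: le_trans (dec _) IH.
have xnext : forall k l, x k = x l -> x k.+1 = x l.+1.
  by move=> k l E; rewrite !xS E.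
pose sigma := fun y : 'cV[R]_n => [ffun i : 'I_n => (0 < y i 0, y i 0 < 0)].
have Dsig : forall y z, sigma y = sigma z -> Dsign y = Dsign z.
  move=> y z E; apply/matrixP => i j; rewrite !mxE; congr (_ * _).
  have := congr1 (fun f : {ffun 'I_n -> bool * bool} => f i) E; rewrite /= !ffunE => -[h1 h2]; exact: sg_eq.
pose f := fun k : 'I_(#|{ffun 'I_n -> bool * bool}|.+1) => sigma (x k).
have : ~~ injectiveb f.
  by apply/negP => /injectiveP /leq_card; rewrite card_ord ltnn.
case/injectivePn => i [j] ij fij.
have [J [L [JL EJL]]] : exists J L : nat, (J < L)%N /\ sigma (x J) = sigma (x L).
  case: (ltngtP i j) => h.
  - by exists i, j.
  - by exists j, i.
  - by move: ij; rewrite (ord_inj h) eqxx.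
have X1 : x J.+1 = x L.+1 by rewrite !xS (Dsig _ _ EJL).
have X2 : x J.+2 = x L.+2 by apply: xnext.
have EE : e J.+1 = e L.+1 by rewrite /e X1 X2.
have EL : e L.+1 <= e J.+2.
  by have := mono J.+2 (L.+1 - J.+2)%N; rewrite subnKC.
have eJ : e J.+1 <= 0.
  have := step J.+1; have := e0 J.+1; have := e0 J.+2 => h1 h2 h3.
  have h4 : e J.+1 * (1 - c) <= e J.+2 * (1 - c).
    by rewrite EE; apply: ler_wpM2r => //; lra.
  nra.
have xfix : x J.+2 = x J.+1.
  by apply/subr0_eq; apply: (mu0 v0).
set K := J.+1 in xfix.
have const : forall p, x (K + p)%N = x K.
  elim => [|p IH]; first by rewrite addn0.
  by rewrite addnS (xnext _ K IH) xfix.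
have sol : A *m x K - abs_mx (x K) = b.
  by have := eqk K; rewrite xfix abs_sol.
split; first by move=> k; rewrite -Ex; exact: Uall.
exists (x K); first by split => // y Hy; exact: Uniq.
move=> i0; rewrite -Ex; apply: cvg_near_cst; exists K => // k /= Kk.
by rewrite -(subnKC Kk) const.
Qed.
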